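(* Let $L>0$, $I$ a finite index set and $\{(x_i,f_i,g_i,h_i,s_i)\}_{i\in I}\subset\mathbb{R}^n\times\mathbb{R}\times\mathbb{R}^n\times\mathbb{R}\times\mathbb{R}^n$. The following are equivalent: (i) there exist functions $f,h:\mathbb{R}^n\to\mathbb{R}$ with $f$ and $Lh-f$ convex such that for all $i\in I$: $f_i=f(x_i)$, $g_i\in\partial f(x_i)$, $h_i=h(x_i)$, $s_i\in\partial h(x_i)$, and $Ls_i-g_i\in\partial(Lh-f)(x_i)$; (ii) for all $i,j\in I$ with $i\neq j$, \[ f_i-f_j-\langle g_j,x_i-x_j\rangle\ge0,\qquad (Lh_i-f_i)-(Lh_j-f_j)-\langle Ls_j-g_j,x_i-x_j\rangle\ge0. \]
   Context: $\partial$ denotes the convex subdifferential. *)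

(* Defs.v *)
From mathcomp Require Import all_boot all_order all_algebra.
From mathcomp Require Import reals.
Set Implicit Arguments. Unset Strict Implicit. Unset Printing Implicit Defensive.
Import Order.TTheory GRing.Theory Num.Theory.
Local Open Scope ring_scope.

Definition dotp (R : realType) (n : nat) (u v : 'rV[R]_n) : R :=
  \sum_(k < n) u ord0 k * v ord0 k.

Definition convex_fun (R : realType) (n : nat) (f : 'rV[R]_n -> R) : Prop :=
  forall (x y : 'rV[R]_n) (t : R), 0 <= t -> t <= 1 ->
    f (t *: x + (1 - t) *: y) <= t * f x + (1 - t) * f y.

Definition subgrad (R : realType) (n : nat) (f : 'rV[R]_n -> R)
    (x g : 'rV[R]_n) : Prop :=
  forall y : 'rV[R]_n, f x + dotp g (y - x) <= f y.

(* Main.v *)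
Require Import Defs.
From mathcomp Require Import all_boot all_order all_algebra.
From mathcomp Require Import reals.
From mathcomp Require Import ring lra.
Import Order.TTheory GRing.Theory Num.Theory.
Local Open Scope ring_scope.

Section Aux.
Variables (R : realType) (n : nat).
Implicit Types (u v w : 'rV[R]_n).

Lemma dotpDl u v w : dotp (u + v) w = dotp u w + dotp v w.
Proof. by rewrite /dotp -big_split; apply eq_bigr=> k _; rewrite !mxE mulrDl. Qed.
Lemma dotpDr u v w : dotp u (v + w) = dotp u v + dotp u w.
Proof. by rewrite /dotp -big_split; apply eq_bigr=> k _; rewrite !mxE mulrDr. Qed.
Lemma dotpZl a u w : dotp (a *: u) w = a * dotp u w.
Proof. by rewrite /dotp mulr_sumr; apply eq_bigr=> k _; rewrite !mxE mulrA. Qed.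
Lemma dotpZr a u w : dotp u (a *: w) = a * dotp u w.
Proof. by rewrite /dotp mulr_sumr; apply eq_bigr=> k _; rewrite !mxE mulrCA. Qed.
Lemma dotpNl u w : dotp (- u) w = - dotp u w.
Proof. by rewrite /dotp -sumrN; apply eq_bigr=> k _; rewrite !mxE mulNr. Qed.
Lemma dotpNr u w : dotp u (- w) = - dotp u w.
Proof. by rewrite /dotp -sumrN; apply eq_bigr=> k _; rewrite !mxE mulrN. Qed.
Lemma dotp0r u : dotp u 0 = 0.
Proof. by rewrite /dotp big1 // => k _; rewrite !mxE mulr0. Qed.

Variable (I : finType).

Definition amax (i0 : I) (c : I -> R) (d xs : I -> 'rV[R]_n) (z : 'rV[R]_n) :=
  \big[Num.max/ c i0 + dotp (d i0) (z - xs i0)]_(j : I) (c j + dotp (d j) (z - xs j)).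

Lemma amax_ub i0 c d xs z j : c j + dotp (d j) (z - xs j) <= amax i0 c d xs z.
Proof. by rewrite /amax (bigD1 j) //= le_max lexx. Qed.

Lemma amax_att i0 c d xs z : exists j, amax i0 c d xs z = c j + dotp (d j) (z - xs j).
Proof.
rewrite /amax; elim/big_ind: _.
- by exists i0.
- move=> a b [ja ->] [jb ->]; rewrite /Num.max; case: ifP => _; [by exists jb | by exists ja].
- by move=> j _; exists j.
Qed.

Lemma affine_id c dd w x y t :
  c + dotp dd (t *: x + (1 - t) *: y - w) =
  t * (c + dotp dd (x - w)) + (1 - t) * (c + dotp dd (y - w)).
Proof. rewrite !dotpDr !dotpNr !dotpZr; ring. Qed.

Lemma amax_props i0 c d xs :
  (forall i j, c j + dotp (d j) (xs i - xs j) <= c i) ->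
  convex_fun (amax i0 c d xs) /\
  forall i, amax i0 c d xs (xs i) = c i /\ subgrad (amax i0 c d xs) (xs i) (d i).
Proof.
move=> H; split.
  move=> x y t t0 t1; have [k ->] := amax_att i0 c d xs (t *: x + (1 - t) *: y).
  rewrite affine_id; apply: lerD.
    by apply: ler_wpM2l => //; apply: amax_ub.
  by apply: ler_wpM2l; [rewrite subr_ge0 | apply: amax_ub].
move=> i.
have E : amax i0 c d xs (xs i) = c i.
  apply/eqP; rewrite eq_le; apply/andP; split.
    by have [k ->] := amax_att i0 c d xs (xs i); apply: H.
  by have := amax_ub i0 c d xs (xs i) i; rewrite subrr dotp0r addr0.
split=> // y; rewrite E; exact: amax_ub.
Qed.

End Aux.

Theorem corollary4p3 (R : realType) (n : nat) (L : R) (I : finType)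
    (x : I -> 'rV[R]_n) (fv : I -> R) (g : I -> 'rV[R]_n)
    (hv : I -> R) (s : I -> 'rV[R]_n) :
  0 < L ->
  (exists f h : 'rV[R]_n -> R,
      convex_fun f /\ convex_fun (fun z => L * h z - f z) /\
      forall i : I,
        fv i = f (x i) /\ subgrad f (x i) (g i) /\
        hv i = h (x i) /\ subgrad h (x i) (s i) /\
        subgrad (fun z => L * h z - f z) (x i) (L *: s i - g i))
  <->
  (forall i j : I, i != j ->
      0 <= fv i - fv j - dotp (g j) (x i - x j) /\
      0 <= (L * hv i - fv i) - (L * hv j - fv j)
             - dotp (L *: s j - g j) (x i - x j)).
Proof.
move=> L0; split.
  move=> [f [h [_ [_ H]]]] i j _.
  have [-> [_ [-> _]]] := H i.
  have [-> [gj [-> [_ pj]]]] := H j.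
  have := gj (x i); have := pj (x i); move=> /= A B; split; lra.
move=> H.
case: (pickP (fun _ : I => true)) => [i0 _ | none]; last first.
  exists (fun _ => 0), (fun _ => 0); split; first by move=> *; lra.
  split; first by move=> *; lra.
  by move=> i; have := none i.
pose cf := @amax R n I i0 fv g x.
pose cp := @amax R n I i0 (fun j => L * hv j - fv j) (fun j => L *: s j - g j) x.
have Hf : forall i j, fv j + dotp (g j) (x i - x j) <= fv i.
  move=> i j; have [->|ne] := eqVneq i j.
    by rewrite subrr dotp0r addr0.
  have [A _] := H i j ne; lra.
have Hp : forall i j, (L * hv j - fv j) + dotp (L *: s j - g j) (x i - x j)
    <= L * hv i - fv i.
  move=> i j; have [->|ne] := eqVneq i j.
    by rewrite subrr dotp0r addr0.
  have [_ A] := H i j ne; lra.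
have [cvf Pf] := @amax_props R n I i0 _ _ _ Hf.
have [cvp Pp] := @amax_props R n I i0 _ _ _ Hp.
have L0' : L != 0 by rewrite gt_eqF.
have Eh : forall z, L * ((cp z + cf z) / L) - cf z = cp z.
  by move=> z; field.
exists cf, (fun z => (cp z + cf z) / L); split => //.
split.
  by move=> y z t t0 t1; rewrite !Eh; apply: cvp.
move=> i; have [Ef Sf] := Pf i; have [Ep Sp] := Pp i.
split; first by [].
split; first by [].
split; first by rewrite /cf /cp Ef Ep; field.
split.
  move=> y; have := Sf y; have := Sp y.
  rewrite /cf /cp dotpDl dotpNl dotpZl Ef Ep => A B.
  have -> : (L * hv i - fv i + fv i) / L = hv i by field.
  rewrite ler_pdivlMr // mulrDl.
  nra.
by move=> y; rewrite !Eh; apply: Sp.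
Qed.
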